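(* $\mathsf{AP}(R_3,R_3)=\operatorname{Pol}(R_3,R'_3)=\mathsf{I}$.
   Context: Tuples in $\{0,1\}^4$ are written as strings $abcd$. The relations $R_1,\dots,R_5\subseteq\{0,1\}^4$ are $R_1=\{0000,1000,0100,1100,1010,0110,1001,0101,0011,1011,0111,1111\}$, $R_2=\{0000,1000,0100,1100,1010,0101,0011,1111\}$, $R_3=\{0000,1100,1010,0101,0011,1011,0111,1111\}$, $R_4=\{0000,1100,1010,0101,0011,1111\}$, $R_5=\{0000,1100,1010,0110,1001,0101,0011,1111\}$. For $R,S\subseteq\{0,1\}^4$, a Boolean function $f\colon\{0,1\}^n\to\{0,1\}$ is analogy-preserving relative to $(R,S)$ if for all $\mathbf{a},\mathbf{b},\mathbf{c},\mathbf{d}\in\{0,1\}^n$ with $(a_i,b_i,c_i,d_i)\in R$ for every $i$ and such that $(f(\mathbf{a}),f(\mathbf{b}),f(\mathbf{c}),x)\in S$ for some $x\in\{0,1\}$, we have $(f(\mathbf{a}),f(\mathbf{b}),f(\mathbf{c}),f(\mathbf{d}))\in S$; $\mathsf{AP}(R,S)$ is the set of all such functions of all arities. $S':=S\cup\{(a,b,c,d)\mid\nexists x\colon(a,b,c,x)\in S\}$, and $\operatorname{Pol}(R,S)$ is the set of Boolean functions $f$ with $f(\mathbf{a}_1,\dots,\mathbf{a}_n)\in S$ (componentwise) for all $\mathbf{a}_1,\dots,\mathbf{a}_n\in R$. $\mathsf{I}$ is the set of all Boolean functions (of all arities) that are constant or a projection. *)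

(* Defs.v *)
From mathcomp Require Import all_boot.
Set Implicit Arguments. Unset Strict Implicit. Unset Printing Implicit Defensive.

(* A relation R ⊆ {0,1}^4, with tuple abcd read as R a b c d (0 = false, 1 = true). *)
Definition rel4 := bool -> bool -> bool -> bool -> bool.

Definition rel_of_list (l : seq (bool * bool * bool * bool)) : rel4 :=
  fun a b c d => (a, b, c, d) \in l.

Definition R3 : rel4 := rel_of_list
  [:: (false, false, false, false); (true, true, false, false);
      (true, false, true, false); (false, true, false, true);
      (false, false, true, true); (true, false, true, true);
      (false, true, true, true); (true, true, true, true)].

Definition rel_prime (S : rel4) : rel4 :=
  fun a b c d => S a b c d || ~~ [exists x : bool, S a b c x].

Definition boolfun (n : nat) := ('I_n -> bool) -> bool.

Definition AP (R S : rel4) (n : nat) (f : boolfun n) : Prop :=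
  forall a b c d : 'I_n -> bool,
    (forall i, R (a i) (b i) (c i) (d i)) ->
    (exists x : bool, S (f a) (f b) (f c) x) ->
    S (f a) (f b) (f c) (f d).

Definition Pol (R S : rel4) (n : nat) (f : boolfun n) : Prop :=
  forall a b c d : 'I_n -> bool,
    (forall i, R (a i) (b i) (c i) (d i)) ->
    S (f a) (f b) (f c) (f d).

Definition in_I (n : nat) (f : boolfun n) : Prop :=
  (exists b : bool, forall x, f x = b) \/ (exists i : 'I_n, forall x, f x = x i).

(* Main.v *)
From Stdlib Require Import FunctionalExtensionality.
Require Import Defs.
From mathcomp Require Import all_boot.

Lemma R3'E a b c d : rel_prime R3 a b c d =
  R3 a b c d || ~~ [exists x : bool, R3 a b c x].
Proof. by []. Qed.

Lemma exb (P : pred bool) : [exists x, P x] = P true || P false.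
Proof.
apply/existsP/orP => [[[] Hx]|[Hx|Hx]]; by [left|right|exists true|exists false].
Qed.

Lemma exR3 a b c : (exists x, R3 a b c x) <-> [exists x : bool, R3 a b c x].
Proof. split; [case=> x Hx; apply/existsP; by exists x | by move/existsP]. Qed.

Section P.
Variable n : nat.
Variable f : boolfun n.
Hypothesis H : Pol R3 (rel_prime R3) f.

Let z := fun _ : 'I_n => false.
Let o := fun _ : 'I_n => true.
Let e (i : 'I_n) := fun j : 'I_n => j == i.


Lemma const1 : f z = true -> forall d, f d = true.
Proof.
move=> Hz d.
have Hr : forall i, R3 (o i) (z i) (o i) (d i) by move=> i; rewrite /o /z; case: (d i).
move: (H _ _ _ _ Hr); rewrite Hz; case: (f o); case: (f d) => //; by rewrite R3'E exb.
Qed.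

Lemma const0 : f z = false -> f o = false -> forall d, f d = false.
Proof.
move=> Hz Ho d.
have Hr : forall i, R3 (o i) (z i) (o i) (d i) by move=> i; rewrite /o /z; case: (d i).
move: (H _ _ _ _ Hr); rewrite Hz Ho; case: (f d) => //; by rewrite R3'E exb.
Qed.

Lemma joinf : f z = false -> forall b c, f (fun i => b i || c i) = f b || f c.
Proof.
move=> Hz b c.
have Hr : forall i, R3 (z i) (b i) (c i) (b i || c i)
  by move=> i; rewrite /z; case: (b i); case: (c i).
move: (H _ _ _ _ Hr); rewrite Hz; case: (f b); case: (f c); case: (f _) => //; by rewrite R3'E exb.
Qed.

Lemma rep : f z = false -> forall (s : seq 'I_n) x,
  f (fun j => x j && (j \in s)) = has (fun i => x i && f (e i)) s.
Proof.
move=> Hz; elim=> [|i s IH] x /=.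
  have -> : (fun j => x j && (j \in [::])) = z.
    by apply: functional_extensionality => j; rewrite andbF.
  by [].
have -> : (fun j => x j && (j \in i :: s)) =
          (fun j => (x j && (j == i)) || (x j && (j \in s))).
  by apply: functional_extensionality => j; rewrite in_cons andb_orr.
rewrite joinf // IH; congr (_ || _).
case xi: (x i) => /=.
  congr f; apply: functional_extensionality => j; rewrite /e.
  by case: (eqVneq j i) => [->|]; rewrite ?xi ?andbF ?andbT.
rewrite -Hz; congr f; apply: functional_extensionality => j; rewrite /z.
by case: (eqVneq j i) => [->|]; rewrite ?xi ?andbF.
Qed.

Lemma uniqf : f z = false -> forall i j, f (e i) -> f (e j) -> i = j.
Proof.
move=> Hz i j fi fj; apply/eqP; apply/negPn/negP => nij.
have Hr : forall k, R3 (e i k) ((fun k => e i k || e j k) k) (z k) (e j k).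
  move=> k; rewrite /e /z /=.
  case: (eqVneq k i) => [->|]; first by rewrite (negbTE nij).
  by case: (k == j).
move: (H _ _ _ _ Hr); rewrite joinf // Hz fi fj.
by rewrite R3'E exb.
Qed.

Lemma polI : in_I f.
Proof.
case Hz: (f z).
  by left; exists true; apply: const1.
case Ho: (f o).
  have R : forall x, f x = has (fun i => x i && f (e i)) (enum 'I_n).
    move=> x; rewrite -rep //; congr f; apply: functional_extensionality => j.
    by rewrite mem_enum andbT.
  move: Ho; rewrite R => /hasP [i _ /= fi].
  right; exists i => x; rewrite R.
  apply/idP/idP.
    case/hasP => k _ /andP [xk fk].
    by rewrite -(uniqf Hz _ _ fk fi).
  by move=> xi; apply/hasP; exists i; rewrite ?mem_enum //= xi fi.
by left; exists false; apply: const0.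
Qed.
End P.

Theorem mainTheorem9 :
  forall (n : nat) (f : boolfun n),
    (AP R3 R3 f <-> Pol R3 (rel_prime R3) f) /\
    (Pol R3 (rel_prime R3) f <-> in_I f).
Proof.
move=> n f; split; split.
- move=> Hap a b c d Hr; rewrite R3'E.
  case Ex: [exists x : bool, R3 (f a) (f b) (f c) x]; last by rewrite orbT.
  by rewrite (Hap a b c d Hr) //; apply/exR3.
- move=> Hp a b c d Hr /exR3 Ex.
  by move: (Hp a b c d Hr); rewrite R3'E Ex orbF.
- exact: polI.
- case=> [[bb Hb]|[i Hi]] a b c d Hr.
    rewrite !Hb; case: bb Hb => _; by rewrite R3'E exb.
  by rewrite !Hi R3'E (Hr i).
Qed.
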